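(* Let $d\in\{4,5\}$ and let $(h_0,\dots,h_d)\in\mathbb{Z}^{d+1}$ satisfy $h_0=1$ and $h_i=h_{d-i}$ for all $i$; write $h(t)=\sum_{i=0}^dh_it^i=\sum_{i=0}^{2}\gamma_it^i(1+t)^{d-2i}$. If $(\gamma_0,\gamma_1,\gamma_2)$ is an $f$-vector, then $(h_0,\dots,h_d)$ is log-concave. If $(\gamma_0,\gamma_1,\gamma_2)$ is the $f$-vector of a balanced simplicial complex, then $h(t)$ is real-rooted.
   Context: An $f$-vector is the sequence $(f_0,f_1,\dots)$ counting the faces of cardinality $0,1,\dots$ of a simplicial complex. A pure simplicial complex of dimension $k$ is balanced if its vertices can be colored with $k+1$ colors so that no face contains two vertices of the same color; a sequence is the $f$-vector of a balanced complex if it is the $f$-vector of such a complex. A sequence $(h_i)$ is log-concave if $h_i^2\geqslant h_{i-1}h_{i+1}$ for all $0<i<d$. A polynomial is real-rooted if all its roots are real. *)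

(* Defs.v *)
From HB Require Import structures.
From mathcomp Require Import all_boot all_order all_algebra all_field.
Set Implicit Arguments. Unset Strict Implicit. Unset Printing Implicit Defensive.
Import Order.TTheory GRing.Theory Num.Theory.
Local Open Scope ring_scope.

Definition is_complex (V : finType) (D : {set {set V}}) : Prop :=
  set0 \in D /\ forall F G : {set V}, F \in D -> G \subset F -> G \in D.

Definition fvec (V : finType) (D : {set {set V}}) (i : nat) : nat :=
  #|[set F in D | #|F| == i]|.

Definition balanced (V : finType) (D : {set {set V}}) (r : nat) : Prop :=
  (forall F, F \in D -> #|F| <= r)%N /\
  (forall F, F \in D -> exists2 G, G \in D & (F \subset G) && (#|G| == r)) /\
  exists c : V -> nat,
    forall F, F \in D -> (forall x, x \in F -> c x < r)%N /\ {in F &, injective c}.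

Definition is_fvector (g : nat -> int) (r : nat) : Prop :=
  exists (n : nat) (D : {set {set 'I_n}}), is_complex D /\
    forall i, (fvec D i)%:Z = (if (i < r)%N then g i else 0).

Definition is_balanced_fvector (g : nat -> int) (r : nat) : Prop :=
  exists (n : nat) (D : {set {set 'I_n}}), is_complex D /\
    (exists k, balanced D k) /\
    forall i, (fvec D i)%:Z = (if (i < r)%N then g i else 0).

Definition hpoly (d : nat) (h : nat -> int) : {poly int} := \poly_(i < d.+1) h i.

Definition log_concave (d : nat) (h : nat -> int) : Prop :=
  forall i, (0 < i < d)%N -> h i.-1 * h i.+1 <= h i ^+ 2.

Definition real_rooted (p : {poly int}) : Prop :=
  forall z : algC, root (map_poly intr p) z -> z \is Num.real.

(* Main.v *)
Require Import Defs.
From HB Require Import structures.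
From mathcomp Require Import all_boot all_order all_algebra all_field.
From mathcomp Require Import zify ring lra.
Import Order.TTheory GRing.Theory Num.Theory.

Section Comb.
Variables (V : finType) (D : {set {set V}}).
Let U := [set x : V | [set x] \in D].

Lemma fvec1E : fvec D 1 = #|U|.
Proof.
rewrite /fvec -(card_imset _ (@set1_inj V)); apply: eq_card => F.
rewrite !inE; apply/andP/imsetP.
  by case=> FD /cards1P [x Fx]; exists x; rewrite // inE -Fx.
by case=> x; rewrite inE => xD ->; rewrite cards1.
Qed.

Lemma edge_sub (cD : is_complex D) F : F \in D -> #|F| == 2 ->
  exists x y, [/\ x != y, F = [set x; y], x \in U & y \in U].
Proof.
move=> FD /cards2P [x [y [xy Fe]]]; exists x, y; split => //; rewrite inE;
  apply: (cD.2 F) => //; rewrite Fe sub1set !inE eqxx ?orbT //.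
Qed.

Lemma fvec2_sq : is_complex D -> fvec D 2 <= #|U| * #|U|.
Proof.
move=> cD; rewrite -cardsX /fvec.
apply: leq_trans (leq_imset_card (fun p : V * V => [set p.1; p.2]) _).
apply: subset_leq_card; apply/subsetP => F; rewrite inE => /andP [FD F2].
have [x [y [_ -> xU yU]]] := edge_sub cD F FD F2.
by apply/imsetP; exists (x, y); rewrite // inE xU yU.
Qed.

Lemma fvec2_bip k : is_complex D -> balanced D k -> (forall i, 2 < i -> fvec D i = 0) ->
  4 * fvec D 2 <= fvec D 1 ^ 2.
Proof.
move=> cD [_ [pure [c hc]]] fk.
have k2 : k < 3.
  case: (ltnP k 3) => // k3; have [G GD /andP [_ Gk]] := pure _ cD.1.
  move: (fk k k3); rewrite /fvec => /eqP; rewrite cards_eq0 => /eqP /setP /(_ G).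
  by rewrite !inE GD Gk.
have cU x : x \in U -> c x < 2.
  rewrite inE => xD; have [/(_ x) + _] := hc _ xD.
  by rewrite inE eqxx => /(_ isT) => ?; lia.
pose A := [set x in U | c x == 0]; pose B := [set x in U | c x == 1].
have UAB : #|U| = #|A| + #|B|.
  rewrite -(cardsID [set x | c x == 0] U); congr (_ + _); apply: eq_card => x;
  rewrite !inE; case xD: ([set x] \in D); rewrite ?andbF ?andbT //=;
  by have := cU x; rewrite inE xD => /(_ isT); case: (c x) => [|[|]].
have e2 : fvec D 2 <= #|A| * #|B|.
  rewrite -cardsX /fvec.
  apply: leq_trans (leq_imset_card (fun p : V * V => [set p.1; p.2]) _).
  apply: subset_leq_card; apply/subsetP => F; rewrite inE => /andP [FD F2].
  have [x [y [xy Fe xU yU]]] := edge_sub cD F FD F2.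
  have cxy : c x != c y.
    apply: contra xy => /eqP e; apply/eqP; have [_ inj] := hc _ FD.
    by apply: inj; rewrite // Fe !inE eqxx ?orbT.
  have := cU x xU; have := cU y yU; move: xU yU; rewrite !inE => xU yU.
  case ex: (c x) => [|[|]] //; case ey: (c y) => [|[|]] // _ _; move: cxy; rewrite ex ey // => _.
    by apply/imsetP; exists (x, y); rewrite // !inE xU yU ex ey.
  apply/imsetP; exists (y, x); last by rewrite Fe /= setUC.
  by rewrite !inE xU yU ex ey.
rewrite fvec1E UAB; move: e2; move: (fvec D 2) #|A| #|B| => f a b e2.
have : 4 * (a * b) <= (a + b) ^ 2.
  have [ab|ba] := leqP a b.
    have [t ->] : exists t, b = a + t by exists (b - a); lia.
    nia.
  have [t ->] : exists t, a = b + t by exists (a - b); lia.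
  nia.
nia.
Qed.
End Comb.

Local Open Scope ring_scope.

Lemma coef1X n i : ((1 + 'X : {poly int}) ^+ n)`_i = ('C(n, i))%:R.
Proof.
rewrite addrC exprD1n coef_sum.
under eq_bigr => j _ do rewrite coefMn coefXn.
case: (ltnP i n.+1) => hi.
  rewrite (bigD1 (Ordinal hi)) //= eqxx big1 ?addr0 //.
  move=> j hj; case: eqP => hij; last by rewrite mul0rn.
  by case/eqP: hj; apply: val_inj.
rewrite big1 ?bin_small //.
move=> j _; case: eqP => hij; last by rewrite mul0rn.
by move: (ltn_ord j); rewrite -hij ltnNge hi.
Qed.

Lemma coefT (g : nat -> int) (d i : nat) :
  (\sum_(j < 3) (g j)%:P * 'X^j * (1 + 'X) ^+ (d - 2 * j))`_i =
  \sum_(j < 3) (if (i < j)%N then 0 else g j * ('C(d - 2 * j, i - j))%:R).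
Proof.
rewrite coef_sum; apply: eq_bigr => j _.
by rewrite -mulrA coefCM coefXnM coef1X; case: ifP; rewrite ?mulr0.
Qed.

Lemma hcoef d (h : nat -> int) i : (i <= d)%N -> (hpoly d h)`_i = h i.
Proof. by rewrite /hpoly coef_poly ltnS => ->. Qed.

Ltac simpl_bins := repeat match goal with |- context [binomial ?a ?b] =>
  let v := eval vm_compute in (binomial a b) in change (binomial a b) with v end.

Lemma hsum d (h g : nat -> int) :
  hpoly d h = \sum_(i < 3) (g i)%:P * 'X^i * (1 + 'X) ^+ (d - 2 * i) ->
  forall i, (i <= d)%N -> h i = \sum_(j < 3) (if (i < j)%N then 0 else g j * ('C(d - 2 * j, i - j))%:R).
Proof. by move=> E i hi; rewrite -(@hcoef d h i) // E coefT. Qed.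

Ltac hc E := rewrite (@hsum _ _ _ E) // !big_ord_recr big_ord0 /=; simpl_bins; ring.

Lemma hvals4 (h g : nat -> int) :
  hpoly 4 h = \sum_(i < 3) (g i)%:P * 'X^i * (1 + 'X) ^+ (4 - 2 * i) ->
  [/\ h 0%N = g 0%N, h 1%N = 4 * g 0%N + g 1%N, h 2%N = 6 * g 0%N + 2 * g 1%N + g 2%N,
      h 3%N = 4 * g 0%N + g 1%N & h 4%N = g 0%N].
Proof.
move=> E; split; [hc E | hc E | hc E | hc E | hc E].
Qed.

Lemma hvals5 (h g : nat -> int) :
  hpoly 5 h = \sum_(i < 3) (g i)%:P * 'X^i * (1 + 'X) ^+ (5 - 2 * i) ->
  h 0%N = g 0%N /\ [/\ h 1%N = 5 * g 0%N + g 1%N, h 2%N = 10 * g 0%N + 3 * g 1%N + g 2%N,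
      h 3%N = 10 * g 0%N + 3 * g 1%N + g 2%N, h 4%N = 5 * g 0%N + g 1%N & h 5%N = g 0%N].
Proof.
move=> E; split; [hc E | split; [hc E | hc E | hc E | hc E | hc E]].
Qed.

Lemma quad_real (w b c : algC) : b \is Num.real -> c \is Num.real ->
  4 * c <= b ^+ 2 -> w ^+ 2 + b * w + c = 0 -> w \is Num.real.
Proof.
move=> br cr hle eq0.
pose r := sqrtC (b ^+ 2 - 4 * c).
have rr : r \is Num.real by apply: ger0_real; rewrite sqrtC_ge0 subr_ge0.
have e : (2 * w + b) ^+ 2 = r ^+ 2.
  rewrite sqrtCK; apply/eqP; rewrite -subr_eq0.
  rewrite (_ : _ - _ = 4 * (w ^+ 2 + b * w + c)); last by ring.
  by rewrite eq0 mulr0.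
have ew : w = ((2 * w + b) - b) / 2 by field.
rewrite ew; move/eqP: e; rewrite eqf_sqr => /orP [] /eqP ->;
  apply: rpredM; rewrite ?rpredV ?rpredB ?rpredN ?rpred_nat //.
Qed.

Lemma quart_real (a b z : algC) : a \is Num.real -> b \is Num.real -> 0 <= a -> 0 <= b ->
  4 * b <= a ^+ 2 -> (1 + z) ^+ 4 + a * z * (1 + z) ^+ 2 + b * z ^+ 2 = 0 -> z \is Num.real.
Proof.
move=> ar br a0 b0 hle eq0.
have z0 : z != 0.
  apply/eqP => z0; move: eq0; rewrite z0 (_ : _ + _ = 1); last by ring.
  by move/eqP; rewrite oner_eq0.
pose s := (1 + z) ^+ 2 / z.
have es : s * z = (1 + z) ^+ 2 by rewrite /s divfK.
have seq : s ^+ 2 + a * s + b = 0.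
  apply: (mulIf (expf_neq0 2 z0)); rewrite mul0r -eq0.
  rewrite (_ : (s ^+ 2 + a * s + b) * z ^+ 2 = (s * z) ^+ 2 + a * z * (s * z) + b * z ^+ 2); last by ring.
  rewrite es; ring.
have sr : s \is Num.real by exact: (@quad_real s a b ar br hle seq).
have sle : s <= 0.
  rewrite real_leNgt //; apply/negP => s0.
  have : 0 < s ^+ 2 + a * s + b.
    by rewrite -addrA ltr_pwDl ?exprn_gt0 // addr_ge0 // mulr_ge0 // ltW.
  by rewrite seq ltxx.
apply: (@quad_real z (2 - s) 1); rewrite ?rpredB ?rpred1 ?rpred_nat //.
  have -> : (2 - s) ^+ 2 = 4 + (s ^+ 2 - 4 * s) by ring.
  rewrite mulr1 lerDl addr_ge0 //; first by rewrite real_exprn_even_ge0.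
  by rewrite oppr_ge0 mulr_ge0_le0.
rewrite (_ : _ + _ = (1 + z) ^+ 2 - s * z); last by ring.
by rewrite es subrr.
Qed.

Lemma hpoly_eval d (h : nat -> int) (z : algC) :
  (map_poly intr (hpoly d h)).[z] = \sum_(i < d.+1) (h i)%:~R * z ^+ i.
Proof.
rewrite (@horner_coef_wide _ d.+1).
  by apply: eq_bigr => i _; rewrite coef_map /= hcoef // -ltnS.
rewrite map_polyE; apply: leq_trans (size_Poly _) _; rewrite size_map.
exact: size_poly.
Qed.

Theorem corollary8p3 (d : nat) (h : nat -> int) (g : nat -> int) :
  ((d == 4) || (d == 5))%N ->
  h 0%N = 1 ->
  (forall i, (i <= d)%N -> h i = h (d - i)%N) ->
  hpoly d h = \sum_(i < 3) (g i)%:P * 'X^i * (1 + 'X) ^+ (d - 2 * i) ->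
  (is_fvector g 3 -> log_concave d h) /\
  (is_balanced_fvector g 3 -> real_rooted (hpoly d h)).
Proof.
move=> hd h0 _ E.
have Hf : is_fvector g 3 -> [/\ 0 <= g 1%N, 0 <= g 2%N & g 2%N <= g 1%N * g 1%N].
  move=> [n [D [cD hf]]]; have f1 := hf 1%N; have f2 := hf 2%N; rewrite /= in f1 f2.
  have := (@fvec2_sq _ D cD); rewrite -(@fvec1E _ D) -f1 -f2 => ?; split; lia.
have Hb : is_balanced_fvector g 3 -> [/\ 0 <= g 1%N, 0 <= g 2%N & 4 * g 2%N <= g 1%N * g 1%N].
  move=> [n [D [cD [[k bk] hf]]]]; have f1 := hf 1%N; have f2 := hf 2%N; rewrite /= in f1 f2.
  have := (@fvec2_bip _ D k cD bk); rewrite -mulnn -f1 -f2 => H.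
  have {}H : (4 * fvec D 2 <= fvec D 1 * fvec D 1)%N.
    by apply: H => i i2; apply/eqP; rewrite -eqz_nat hf ltnNge i2.
  split; lia.
have key : forall a b : int, 0 <= a -> 0 <= b -> 4 * b <= a * a ->
    forall z : algC, (1 + z) ^+ 4 + a%:~R * z * (1 + z) ^+ 2 + b%:~R * z ^+ 2 = 0 -> z \is Num.real.
  move=> a b a0 b0 ab z; apply: quart_real; rewrite ?realz ?ler0z //.
  by move: ab; rewrite -(ler_int algC) !intrM expr2.
case/orP: hd => /eqP ?; subst d.
  have [e0 e1 e2 e3 e4] := @hvals4 _ _ E.
  have g0 : g 0%N = 1 by rewrite -e0.
  split.
    move=> /Hf [a0 b0 ab] i /andP [i0 id].
    case: i i0 id => [|[|[|[|]]]] //= _ _; rewrite ?e0 ?e1 ?e2 ?e3 ?e4 g0 expr2; nia.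
  move=> /Hb [a0 b0 ab] z; rewrite /root hpoly_eval => /eqP hz.
  apply: (key _ _ a0 b0 ab); rewrite -hz !big_ord_recr big_ord0 /= e0 e1 e2 e3 e4 g0.
  rewrite !(intrD, intrM); ring.
have [e0 [e1 e2 e3 e4 e5]] := @hvals5 _ _ E.
have g0 : g 0%N = 1 by rewrite -e0.
split.
  move=> /Hf [a0 b0 ab] i /andP [i0 id].
  case: i i0 id => [|[|[|[|[|]]]]] //= _ _; rewrite ?e0 ?e1 ?e2 ?e3 ?e4 ?e5 g0 expr2; nia.
move=> /Hb [a0 b0 ab] z; rewrite /root hpoly_eval => /eqP hz.
have : (1 + z) * ((1 + z) ^+ 4 + (g 1%N)%:~R * z * (1 + z) ^+ 2 + (g 2%N)%:~R * z ^+ 2) = 0.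
  rewrite -hz !big_ord_recr big_ord0 /= e0 e1 e2 e3 e4 e5 g0.
  rewrite !(intrD, intrM); ring.
move/eqP; rewrite mulf_eq0 => /orP [/eqP h1 | /eqP q].
  have -> : z = (1 + z) - 1 by ring.
  by rewrite h1 sub0r rpredN rpred1.
exact: (key _ _ a0 b0 ab).
Qed.
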